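(* Let $(T,\leq)$ be an ordered set and let $T^\ast$ be its ultrapower with respect to an ultrafilter $\mathcal{U}$ on $\mathbb{N}$. The following are equivalent: (a) $T$ is dense everywhere, i.e. for all $a,b \in T$ with $a < b$ there exists $c \in T$ with $a < c < b$; (b) whenever $a_k = ((a_k)_n)$ and $b_k = ((b_k)_n)$ ($k\in\mathbb{N}$) are sequences in $T$ such that for every $k \in \mathbb{N}$ \[ \overline{a_k} \leq \overline{a_{k+1}} < \overline{b_{k+1}} \leq \overline{b_k}, \] then \[ \bigcap_{k\in\mathbb{N}} \, ]\overline{a_k}, \overline{b_k}[ \, \neq \emptyset, \] where $]x,y[ = \{ z \in T^\ast : x < z < y\}$.
   Context: An ordered set is a nonempty set with a reflexive, antisymmetric, transitive and linear (total) relation $\leq$. An ultrafilter on $\mathbb{N}$ is a nonempty family $\mathcal{U}$ of subsets of $\mathbb{N}$ such that: (1) $K \in \mathcal{U}$, $K \subset L \subset \mathbb{N}$ imply $L \in \mathcal{U}$; (2) $K,L \in \mathcal{U}$ imply $K\cap L \in \mathcal{U}$; (3) every $K \in \mathcal{U}$ is infinite; (4) for every $K \subset \mathbb{N}$, $K \in \mathcal{U}$ or $\mathbb{N}\setminus K \in \mathcal{U}$. The ultrapower $T^\ast$: on the set $\mathcal{T}$ of all sequences $(a_n):\mathbb{N}\to T$ define $(a_n)\sim(b_n)$ iff $\{n : a_n = b_n\} \in \mathcal{U}$; this is an equivalence relation, $T^\ast$ is the set of its classes, $\overline{(a_n)}$ denotes the class of $(a_n)$, and $T^\ast$ is ordered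 by $\overline{(a_n)} \leq \overline{(b_n)}$ iff $\{ n : a_n \leq b_n\} \in \mathcal{U}$ (a well-defined total order); $<$ denotes the corresponding strict order. *)

(* Defs.v *)
From Stdlib Require Import Arith.

Definition ordered_set {T : Type} (le : T -> T -> Prop) : Prop :=
  (forall x, le x x) /\
  (forall x y, le x y -> le y x -> x = y) /\
  (forall x y z, le x y -> le y z -> le x z) /\
  (forall x y, le x y \/ le y x).

Definition lt_of {T : Type} (le : T -> T -> Prop) (x y : T) : Prop :=
  le x y /\ x <> y.

Definition dense_everywhere {T : Type} (le : T -> T -> Prop) : Prop :=
  forall a b : T, lt_of le a b -> exists c : T, lt_of le a c /\ lt_of le c b.

Definition ultrafilter (U : (nat -> Prop) -> Prop) : Prop :=
  (exists K, U K) /\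
  (forall K L : nat -> Prop, U K -> (forall n, K n -> L n) -> U L) /\
  (forall K L : nat -> Prop, U K -> U L -> U (fun n => K n /\ L n)) /\
  (forall K : nat -> Prop, U K -> forall m, exists n, m <= n /\ K n) /\
  (forall K : nat -> Prop, U K \/ U (fun n => ~ K n)).

(* Ultrapower T^* : elements are represented by sequences nat -> T.
   Equivalence, order and strict order on T^* expressed on representatives
   (all are invariant under the equivalence). *)
Definition ueq {T : Type} (U : (nat -> Prop) -> Prop) (a b : nat -> T) : Prop :=
  U (fun n => a n = b n).

Definition ule {T : Type} (U : (nat -> Prop) -> Prop) (le : T -> T -> Prop)
  (a b : nat -> T) : Prop :=
  U (fun n => le (a n) (b n)).

Definition ult {T : Type} (U : (nat -> Prop) -> Prop) (le : T -> T -> Prop)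
  (a b : nat -> T) : Prop :=
  ule U le a b /\ ~ ueq U a b.

(* Main.v *)
Require Import Defs.
From Stdlib Require Import Arith Lia Classical ClassicalEpsilon.

Section S.
Variables (T : Type) (le : T -> T -> Prop) (HT : ordered_set le)
  (U : (nat -> Prop) -> Prop) (HU : ultrafilter U).

Lemma U_nonempty K : U K -> exists n, K n.
Proof. destruct HU as (_&_&_&H&_). intros HK. destruct (H K HK 0) as (n&_&Hn). eauto. Qed.

Lemma U_mono (K L : nat -> Prop) : U K -> (forall n, K n -> L n) -> U L.
Proof. destruct HU as (_&H&_). eauto. Qed.

Lemma U_and (K L : nat -> Prop) : U K -> U L -> U (fun n => K n /\ L n).
Proof. destruct HU as (_&_&H&_). eauto. Qed.

Lemma U_true (K : nat -> Prop) : (forall n, K n) -> U K.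
Proof. destruct HU as ((K0&HK0)&_). intros H. eapply U_mono; eauto. Qed.

Lemma ult_U a b : ult U le a b -> U (fun n => lt_of le (a n) (b n)).
Proof.
  intros [H1 H2]. destruct HU as (_&_&_&_&Hu).
  destruct (Hu (fun n => a n = b n)) as [H|H]; [contradiction|].
  eapply U_mono; [apply (U_and _ _ H1 H)|]. intros n [p q]; split; auto.
Qed.

Lemma U_ult a b : U (fun n => lt_of le (a n) (b n)) -> ult U le a b.
Proof.
  intros H; split.
  - eapply U_mono; [exact H|]. intros n [p _]; exact p.
  - intros He. destruct (U_nonempty _ (U_and _ _ H He)) as (n&[_ q]&r). auto.
Qed.

Lemma lt_sand x x' y' y : le x x' -> lt_of le x' y' -> le y' y -> lt_of le x y.
Proof.
  destruct HT as (Hr&Ha&Ht&_). intros h1 [h2 h3] h4. split.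
  - eauto.
  - intros ->. apply h3. apply Ha; auto. eauto.
Qed.

Lemma le_lt x y z : le x y -> lt_of le y z -> lt_of le x z.
Proof. destruct HT as (Hr&_). intros; eapply lt_sand; eauto. Qed.
Lemma lt_le x y z : lt_of le x y -> le y z -> lt_of le x z.
Proof. destruct HT as (Hr&_). intros; eapply lt_sand; eauto. Qed.

Variables a b : nat -> nat -> T.
Definition cond j n := le (a j n) (a (S j) n) /\ lt_of le (a (S j) n) (b (S j) n)
   /\ le (b (S j) n) (b j n).
Definition SS m n := forall j, j <= m -> cond j n.

Lemma chain M n : SS M n -> forall j, j <= M -> le (a j n) (a M n) /\ le (b M n) (b j n).
Proof.
  destruct HT as (Hr&_&Ht&_).
  induction M; intros HS j Hj.
  - assert (j = 0) by lia; subst; auto.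
  - assert (HS' : SS M n) by (intros i Hi; apply HS; lia).
    destruct (HS M (le_S _ _ (le_n _))) as (c1&c2&c3).
    destruct (Nat.eq_dec j (S M)) as [->|Hne]; [auto|].
    destruct (IHM HS' j ltac:(lia)). split; eauto.
Qed.

Lemma SS_lt M n : SS M n -> lt_of le (a M n) (b M n).
Proof. intros H. destruct (H M (le_n _)) as (c1&c2&c3). eapply lt_sand; eauto. Qed.

End S.

Theorem mainTheorem4 (T : Type) (le : T -> T -> Prop)
  (HT : ordered_set le) (Hne : inhabited T)
  (U : (nat -> Prop) -> Prop) (HU : ultrafilter U) :
  dense_everywhere le <->
  (forall a b : nat -> (nat -> T),
     (forall k : nat,
        ule U le (a k) (a (S k)) /\ ult U le (a (S k)) (b (S k)) /\
        ule U le (b (S k)) (b k)) ->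
     exists z : nat -> T, forall k : nat, ult U le (a k) z /\ ult U le z (b k)).
Proof.
  split.
  - intros Hd a b Hab.
    set (P := fun m n c => forall m', m' <= m -> SS T le a b m' n ->
                 lt_of le (a m' n) c /\ lt_of le c (b m' n)).
    assert (HP : forall m n, exists c, P m n c).
    { intros m n. induction m.
      - destruct (classic (SS T le a b 0 n)) as [H|H].
        + destruct (Hd _ _ (SS_lt T le HT a b 0 n H)) as (c&h1&h2).
          exists c. intros m' Hm' _. assert (m' = 0) by lia; subst; auto.
        + destruct Hne as [t]. exists t. intros m' Hm' H'.
          assert (m' = 0) by lia; subst; contradiction.
      - destruct (classic (SS T le a b (S m) n)) as [H|H].
        + destruct (Hd _ _ (SS_lt T le HT a b _ n H)) as (c&h1&h2).
          exists c. intros m' Hm' _.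
          destruct (chain T le HT a b _ n H m' Hm').
          split; [eapply le_lt|eapply lt_le]; eauto.
        + destruct IHm as (c&Hc). exists c. intros m' Hm' H'.
          destruct (Nat.eq_dec m' (S m)) as [->|Hn]; [contradiction|].
          apply Hc; auto; lia. }
    set (z := fun n => proj1_sig (constructive_indefinite_description _ (HP n n))).
    assert (Hz : forall n, P n n (z n)).
    { intros n. exact (proj2_sig (constructive_indefinite_description _ (HP n n))). }
    assert (HSU : forall k, U (SS T le a b k)).
    { induction k.
      - eapply U_mono; auto.
        + destruct (Hab 0) as (h1&h2&h3).
          exact (U_and U HU _ _ h1 (U_and U HU _ _ (ult_U T le U HU _ _ h2) h3)).
        + intros n hn j Hj. assert (j = 0) by lia; subst. exact hn.
      - eapply U_mono; auto.
        + destruct (Hab (S k)) as (h1&h2&h3).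
          exact (U_and U HU _ _ IHk
            (U_and U HU _ _ h1 (U_and U HU _ _ (ult_U T le U HU _ _ h2) h3))).
        + intros n [hn hc] j Hj. destruct (Nat.eq_dec j (S k)) as [->|];
            [exact hc| apply hn; lia]. }
    assert (Hge : forall k, U (fun n => k <= n)).
    { intros k. destruct HU as (_&_&_&Hinf&Hu).
      destruct (Hu (fun n => k <= n)) as [H|H]; auto.
      destruct (Hinf _ H k) as (n&h1&h2). lia. }
    exists z. intros k. split; apply U_ult; auto;
      (eapply U_mono; [auto | exact (U_and U HU _ _ (HSU k) (Hge k)) |]);
      intros n [h1 h2]; apply (Hz n k h2 h1).
  - intros H x y Hxy. apply NNPP; intros Hno.
    destruct (H (fun _ _ => x) (fun _ _ => y)) as (z&Hz).
    { destruct HT as (Hr&_). intros k; split; [|split].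
      - apply (U_true U HU); intros; apply Hr.
      - apply U_ult; auto. apply (U_true U HU); auto.
      - apply (U_true U HU); intros; apply Hr. }
    destruct (Hz 0) as (h1&h2).
    destruct (U_nonempty U HU _ (U_and U HU _ _ (ult_U T le U HU _ _ h1) (ult_U T le U HU _ _ h2)))
      as (n&p&q).
    apply Hno. exists (z n). auto.
Qed.
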